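(* Let $q>2$ be a prime power. In $\mathrm{PG}(2,q^2)$ there exists a semioval $\mathcal{S}\subset\mathcal{H}_q$ of size $k$ for every integer $k$ satisfying $q^3+1\geq k\geq\frac{q^3+2q^2-q+2}{2}$ if $q$ is odd, and $q^3+1\geq k\geq\frac{q^3+3q^2-2q+2}{2}$ if $q$ is even.
   Context: $\mathrm{PG}(2,q^2)$ is the Desarguesian projective plane over $\mathbb{F}_{q^2}$. $\mathcal{H}_q$ denotes the Hermitian curve, the set of points of $\mathrm{PG}(2,q^2)$ satisfying $X_2X_0^q+X_2^qX_0+X_1^{q+1}=0$ (it has $q^3+1$ points). A semioval is a non-empty pointset $\mathcal{S}$ such that for every $P\in\mathcal{S}$ there is a unique line $t_P$ with $\mathcal{S}\cap t_P=\{P\}$. *)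

(* Defs.v *)
From HB Require Import structures.
From mathcomp Require Import all_boot all_order all_algebra.
Set Implicit Arguments. Unset Strict Implicit. Unset Printing Implicit Defensive.
Import GRing.Theory.
Local Open Scope ring_scope.

Definition prime_power (q : nat) : Prop :=
  exists p n : nat, prime p /\ (0 < n)%N /\ q = (p ^ n)%N.

Section PG2.
Variable F : finFieldType.

(* Normalized homogeneous coordinates: first nonzero coordinate equals 1.
   This picks a unique representative of each point of PG(2,F). *)
Definition pnorm (v : F * F * F) : bool :=
  let: (a, b, c) := v in
  if a != 0 then a == 1 else if b != 0 then b == 1 else c == 1.

Definition point := {v : F * F * F | pnorm v}.
Definition line := {v : F * F * F | pnorm v}.

Definition incident (P : point) (l : line) : bool :=
  let: (x0, x1, x2) := val P in
  let: (a0, a1, a2) := val l in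
  a0 * x0 + a1 * x1 + a2 * x2 == 0.

Definition line_pts (l : line) : {set point} := [set P | incident P l].

Definition hermitian_curve (q : nat) : {set point} :=
  [set P : point | let: (x0, x1, x2) := val P in
     x2 * x0 ^+ q + x2 ^+ q * x0 + x1 ^+ q.+1 == 0].

Definition semioval (S : {set point}) : Prop :=
  S != set0 /\
  forall P, P \in S -> exists! l : line, S :&: line_pts l = [set P].

End PG2.

(* Main.v *)
Require Import Defs.
From mathcomp Require Import all_boot all_order all_algebra.
From HB Require Import structures.
From mathcomp Require Import all_field zify ring lra.
Set Implicit Arguments. Unset Strict Implicit. Unset Printing Implicit Defensive.
Import GRing.Theory.

Lemma card_partition_sum (T U : finType) (f : T -> U) (X : {set T}) (B : {set U}) :
  (forall x, x \in X -> f x \in B) ->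
  #|X| = (\sum_(b in B) #|[set x in X | f x == b]|)%N.
Proof.
move=> hXB.
rewrite -sum1_card (partition_big f (mem B)) //=.
apply: eq_bigr => b _; rewrite -sum1_card; apply: eq_bigl => x; by rewrite !inE.
Qed.

Lemma sum_le_eq (U : finType) (B : {set U}) (a : U -> nat) m :
  (forall b, b \in B -> a b <= m)%N ->
  (\sum_(b in B) a b = #|B| * m)%N -> forall b, b \in B -> a b = m.
Proof.
move=> hle hs b hb; apply/eqP; rewrite eqn_leq hle //=.
rewrite leqNgt; apply/negP => hlt.
move: hs; rewrite (bigD1 b) //= => hs.
have : (\sum_(i in B | i != b) a i <= (#|B|.-1) * m)%N.
  have -> : (#|B|.-1 = #|[set i in B | i != b]|)%N.
    rewrite (cardsD1 b B) hb /=; apply: eq_card => i; by rewrite !inE andbC.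
  apply: (@leq_trans (\sum_(i in [set i in B | i != b]) m)); last by rewrite sum_nat_const.
  rewrite (eq_bigl (fun i => i \in [set i in B | i != b])); last by move=> i; rewrite !inE.
  apply: leq_sum => i; rewrite inE => /andP[hi _]; exact: hle.
have hB : (0 < #|B|)%N by apply/card_gt0P; exists b.
move: hs; case: #|B| hB => // n _ /= hs.
rewrite mulSn in hs; move=> h2; lia.
Qed.

Lemma fiber_eq (T U : finType) (f : T -> U) (X : {set T}) (B : {set U}) m n :
  0 < m -> (forall x, x \in X -> f x \in B) ->
  (forall b, b \in B -> #|[set x in X | f x == b]| <= m) -> #|B| <= n -> #|X| = n * m ->
  #|B| = n /\ forall b, b \in B -> #|[set x in X | f x == b]| = m.
Proof.
move=> m0 hXB hle hBn hX.
have hs := card_partition_sum hXB.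
have h1 : \sum_(b in B) #|[set x in X | f x == b]| <= #|B| * m.
  rewrite -sum_nat_const; exact: leq_sum.
have hB : #|B| = n.
  apply/eqP; rewrite -(eqn_pmul2r m0) eqn_leq; apply/andP; split.
    by rewrite leq_mul2r hBn orbT.
  by rewrite -hX hs.
split=> //; apply: sum_le_eq => //.
apply/eqP; rewrite eqn_leq h1 /= hB -hX hs //.
Qed.

Lemma exists_subset (T : finType) (Y : {set T}) n :
  n <= #|Y| -> exists X : {set T}, X \subset Y /\ #|X| = n.
Proof.
move=> hn; exists [set x in take n (enum Y)]; split.
  apply/subsetP=> x; rewrite inE => /mem_take; by rewrite mem_enum.
have hu : uniq (take n (enum Y)) by apply: take_uniq; exact: enum_uniq.
rewrite cardsE; move/card_uniqP: hu => ->.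
by rewrite size_take -cardE; case: ltngtP hn.
Qed.

Lemma odd_case t k : 0 < t -> k <= (2*t+1)^3 ->
  ((2*t+1)^3 + 2*(2*t+1)^2 - (2*t+1) + 2) %/ 2 <= k ->
  (2*t+1)^3 - k < (2*t+1) * ((2*t+1) * t - 1).
Proof.
move=> t0 hk.
have -> : ((2*t+1)^3 + 2*(2*t+1)^2 - (2*t+1) + 2) = 2 * (4*t^3+10*t^2+6*t+2).
  rewrite !expnS !expn0; nia.
rewrite mulKn //.
rewrite !expnS !expn0 in hk *; nia.
Qed.
Lemma even_case t k : 0 < t -> k <= (2*t+2)^3 ->
  ((2*t+2)^3 + 3*(2*t+2)^2 - 2*(2*t+2) + 2) %/ 2 <= k ->
  (2*t+2)^3 - k < (2*t+2) * ((2*t+2) * t - 1).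
Proof.
move=> t0 hk.
have -> : ((2*t+2)^3 + 3*(2*t+2)^2 - 2*(2*t+2) + 2) = 2 * (4*t^3+18*t^2+22*t+9).
  rewrite !expnS !expn0; nia.
rewrite mulKn //.
rewrite !expnS !expn0 in hk *; nia.
Qed.

Lemma q_param q : 2 < q -> exists t,
  [/\ 0 < t, (q.-1)./2 = t & if odd q then q = 2*t+1 else q = 2*t+2].
Proof.
case: q => // q' hq'; exists (q'./2); split => //=.
  have h := odd_double_half q'; rewrite -mul2n in h.
  case: (odd q') h => /= h; lia.
have h := odd_double_half q'; rewrite -mul2n in h.
case: (odd q') h => /= h; lia.
Qed.

Lemma arA n a : 2 < n -> a <= n - 2 -> 1 < n - a. Proof. lia. Qed.
Lemma arB (b : bool) a : 1 < b + a -> 0 < a. Proof. case: b => /=; lia. Qed.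
Lemma arC a b n : a <= n -> a + b = n.+2 -> 1 < b. Proof. lia. Qed.
Lemma arD r q : 2 < q ->
  (if r == q.-1 then q - 2 else r) + (if r == q.-1 then 1 else 0) = r.
Proof. move=> hq; case: eqP => [->|_]; last by rewrite addn0. by case: q hq => // n hn /=; lia. Qed.
Lemma arE r q : 2 < q -> r < q -> (if r == q.-1 then q - 2 else r) <= q - 2.
Proof. move=> hq hr; case: eqP => // /eqP; case: q hq hr => // n hn hr /=; lia. Qed.
Lemma arF q : 2 < q -> (if false then 1 else 0) <= q - 2 /\ (if true then 1 else 0) <= q - 2.
Proof. lia. Qed.

Local Open Scope ring_scope.

Lemma roots_card (F : fieldType) (T : finType) (f : T -> F) (P : pred T) (p : {poly F}) :
  injective f -> p != 0 -> (forall x, P x -> root p (f x)) -> (#|[set x | P x]| < size p)%N.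
Proof.
move=> finj p0 hP.
have -> : #|[set x | P x]| = size (map f (enum [set x | P x])) by rewrite size_map cardE.
apply: max_poly_roots => //.
  by apply/allP=> y /mapP[x]; rewrite mem_enum inE => /hP ? ->.
by rewrite map_inj_uniq ?enum_uniq.
Qed.

Section Field.
Variable F : finFieldType.
Variable q : nat.
Hypothesis hq : (2 < q)%N.
Hypothesis hF : #|F| = (q ^ 2)%N.
Hypothesis frD_ : forall x y : F, (x + y) ^+ q = x ^+ q + y ^+ q.

Definition fr (x : F) := x ^+ q.
Definition Nm (x : F) := x ^+ q.+1.
Definition Tr (x : F) := x + fr x.
Definition Kset := [set x : F | fr x == x].

Lemma frD x y : fr (x + y) = fr x + fr y. Proof. exact: frD_. Qed.
Lemma fr0 : fr 0 = 0. Proof. by rewrite /fr expr0n; case: q hq. Qed.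
Lemma fr1 : fr 1 = 1. Proof. by rewrite /fr expr1n. Qed.
Lemma frM x y : fr (x * y) = fr x * fr y. Proof. by rewrite /fr exprMn. Qed.
Lemma frN x : fr (- x) = - fr x.
Proof. by apply: (@addrI _ (fr x)); rewrite -frD !subrr fr0. Qed.
Lemma frB x y : fr (x - y) = fr x - fr y. Proof. by rewrite frD frN. Qed.
Lemma frK x : fr (fr x) = x.
Proof. by rewrite /fr -exprM mulnn -hF expf_card. Qed.
Lemma fr_inj : injective fr. Proof. exact: (can_inj frK). Qed.
Lemma NmE x : Nm x = x * fr x. Proof. by rewrite /Nm exprS. Qed.
Lemma frNm x : fr (Nm x) = Nm x. Proof. by rewrite NmE frM frK mulrC. Qed.
Lemma frTr x : fr (Tr x) = Tr x. Proof. by rewrite /Tr frD frK addrC. Qed.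
Lemma Nm_eq0 x : (Nm x == 0) = (x == 0). Proof. by rewrite /Nm expf_eq0. Qed.
Lemma NmK x : Nm x \in Kset. Proof. by rewrite inE frNm. Qed.
Lemma TrK x : Tr x \in Kset. Proof. by rewrite inE frTr. Qed.
Lemma fr_eq0 x : (fr x == 0) = (x == 0).
Proof. by rewrite /fr expf_eq0; case: q hq. Qed.

Lemma K_le : (#|Kset| <= q)%N.
Proof.
have : (#|[set x : F | x \in Kset]| < size (('X^q - 'X)%R : {poly F}))%N.
  apply: (@roots_card _ _ id) => //.
    by rewrite subr_eq0; apply/eqP => /(congr1 (size : {poly F} -> nat));
      rewrite size_polyXn size_polyX; case: q hq => [|[|[|]]].
  by move=> x; rewrite inE /root !hornerE subr_eq0.
rewrite size_addl ?size_polyXn ?size_opp ?size_polyX ?ltnS //; last by case: q hq => [|[|[|]]].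
by rewrite (eq_card (B:=Kset)) // => x; rewrite inE.
Qed.

Lemma Tr_fib_le a : (#|[set x : F | Tr x == a]| <= q)%N.
Proof.
pose p : {poly F} := 'X^q + ('X - a%:P).
have hs : size p = q.+1.
  by rewrite /p size_addl ?size_polyXn ?size_XsubC //; case: q hq => [|[|[|]]].
have : (#|[set x : F | Tr x == a]| < size p)%N.
  apply: (@roots_card _ _ id) => //.
    by rewrite -size_poly_eq0 hs.
  by move=> x /eqP ha; rewrite /root /p hornerD hornerXn hornerXsubC -ha /Tr /fr /=; apply/eqP; ring.
by rewrite hs.
Qed.

Lemma Tr_count : #|Kset| = q /\ forall a, a \in Kset -> #|[set x in [set: F] | Tr x == a]| = q.
Proof.
apply: fiber_eq.
- by case: q hq.
- by move=> x _; exact: TrK.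
- move=> b _; apply: leq_trans (Tr_fib_le b); apply: subset_leq_card.
  by apply/subsetP=> x; rewrite !inE.
- exact: K_le.
- by rewrite cardsT hF mulnn.
Qed.

Lemma card_K : #|Kset| = q. Proof. by case: Tr_count. Qed.
Lemma card_Tr a : a \in Kset -> #|[set x : F | Tr x == a]| = q.
Proof.
case: Tr_count => _ h /h <-; apply: eq_card => x; by rewrite !inE.
Qed.

Lemma Nm_fib_le b : (#|[set x in [set x : F | x != 0%R] | Nm x == b]| <= q.+1)%N.
Proof.
pose p : {poly F} := 'X^(q.+1) - b%:P.
have hs : size p = q.+2 by rewrite /p size_XnsubC.
have : (#|[set x in [set x : F | x != 0%R] | Nm x == b]| < size p)%N.
  apply: (@roots_card _ _ id) => //.
    by rewrite -size_poly_eq0 hs.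
  move=> x; rewrite inE => /andP[_ /eqP ha].
  by rewrite /root /p hornerD hornerXn hornerN hornerC -ha /Nm subrr.
by rewrite hs.
Qed.

Lemma card_Nm r : r \in Kset -> r != 0 -> #|[set x : F | Nm x == r]| = q.+1.
Proof.
move=> rK r0.
have h := @fiber_eq _ _ Nm [set x : F | x != 0%R] (Kset :\ 0) q.+1 q.-1 isT.
case: h => //.
- by move=> x; rewrite !inE frNm eqxx Nm_eq0 andbT.
- by move=> b _; exact: Nm_fib_le.
- have := cardsD1 0 Kset; rewrite card_K inE fr0 eqxx /= => ->; by rewrite add1n.
- have -> : [set x : F | x != 0%R] = [set~ 0] by apply/setP=> x; rewrite !inE.
  rewrite cardsC1 hF; case: q hq => // n _ /=; nia.
move=> _ /(_ r); rewrite in_setD1 r0 rK => /(_ isT) <-.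
apply: eq_card => x; rewrite !inE; case: (eqVneq x 0) => // ->.
by rewrite /= /Nm expr0n /= eq_sym (negbTE r0).
Qed.

Lemma pinf_proof : pnorm ((0 : F), (0 : F), (1 : F)).
Proof. by rewrite /pnorm eqxx /= eqxx. Qed.
Definition pinf : point F := exist (@pnorm F) _ pinf_proof.

Lemma affpt_proof (p : F * F) : pnorm (1, p.1, p.2).
Proof. by rewrite /pnorm oner_neq0 eqxx. Qed.
Definition affpt (p : F * F) : point F := exist (@pnorm F) _ (affpt_proof p).

Lemma affpt_inj : injective affpt.
Proof. by case=> a b [c d] /(congr1 val) /= [-> ->]. Qed.

Lemma affpt_neq_pinf p : affpt p != pinf.
Proof. by apply/eqP => /(congr1 val) [] /eqP; rewrite oner_eq0. Qed.

Lemma point_cases (P : point F) :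
  P = pinf \/ (exists p, P = affpt p) \/ (exists c, val P = (0, 1, c)).
Proof.
case: P => [[[a b] c] h]; have h' := h; rewrite /pnorm in h'.
case: (eqVneq a 0) h' => [a0|a0] /= h'.
  case: (eqVneq b 0) h' => [b0|b0] /= /eqP h'.
    by left; apply: val_inj; rewrite /= a0 b0 h'.
  by right; right; exists c; rewrite /= a0 h'.
by move/eqP: h' => a1; right; left; exists (b, c); apply: val_inj; rewrite /= a1.
Qed.

Definition AffH := [set p : F * F | Tr p.2 + Nm p.1 == 0].

Lemma pinf_H : pinf \in hermitian_curve F q.
Proof. by rewrite inE /= !expr0n /=; case: q hq => // n _; rewrite !mulr0 !addr0. Qed.

Lemma affpt_H p : (affpt p \in hermitian_curve F q) = (p \in AffH).
Proof. by rewrite !inE /= expr1n mulr1 mulr1. Qed.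

Lemma inf_notH (P : point F) c : val P = (0, 1, c) -> P \notin hermitian_curve F q.
Proof.
move=> hP; rewrite inE; case: P hP => [v hv] /= ->.
by rewrite expr0n expr1n; case: q hq => // n _; rewrite /= !mulr0 !add0r oner_eq0.
Qed.

Definition nf (a : F * F * F) : F * F * F :=
  let: (a0, a1, a2) := a in
  if a0 != 0 then (1, a1 / a0, a2 / a0)
  else if a1 != 0 then (0, 1, a2 / a1) else (0, 0, 1).

Lemma nf_norm a : pnorm (nf a).
Proof.
case: a => [[a0 a1] a2]; rewrite /nf.
case: (eqVneq a0 0) => [_|a0n] /=; last by rewrite /pnorm oner_neq0 eqxx.
case: (eqVneq a1 0) => [_|a1n] /=; last by rewrite /pnorm eqxx oner_neq0 /= eqxx.
by rewrite /pnorm !eqxx.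
Qed.

Definition mkline a : line F := exist (@pnorm F) (nf a) (nf_norm a).

Definition scale3 (l : F) (a : F * F * F) : F * F * F :=
  let: (a0, a1, a2) := a in (l * a0, l * a1, l * a2).

Lemma nf_scale a0 a1 a2 : a2 != 0 ->
  exists2 l, l != 0 & nf (a0, a1, a2) = scale3 l (a0, a1, a2).
Proof.
move=> a2n; rewrite /nf.
case: (eqVneq a0 0) => [e0|a0n] /=.
  case: (eqVneq a1 0) => [e1|a1n] /=.
    exists a2^-1; first by rewrite invr_eq0.
    by rewrite /scale3 e0 e1 !mulr0 mulVf.
  exists a1^-1; first by rewrite invr_eq0.
  by rewrite /scale3 e0 mulr0 mulVf // mulrC.
exists a0^-1; first by rewrite invr_eq0.
by rewrite /scale3 mulVf // ![a0^-1 * _]mulrC.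
Qed.

Lemma norm_prop x y l : pnorm x -> pnorm y -> l != 0 -> y = scale3 l x -> y = x.
Proof.
case: x => [[x0 x1] x2]; move=> hx hy l0 ey; subst y; move: hx hy.
rewrite /pnorm /=.
case: (eqVneq x0 0) => [->|x0n] /=.
  rewrite mulr0 eqxx /=.
  case: (eqVneq x1 0) => [->|x1n] /=.
    by rewrite mulr0 eqxx /= => /eqP -> /eqP; rewrite mulr1 => ->.
  move=> /eqP -> ; rewrite mulr1 l0 /= => /eqP ->; by rewrite !mul1r.
move=> /eqP ->; rewrite mulr1 l0 /= => /eqP ->; by rewrite !mul1r.
Qed.

Definition tinf : line F := exist (@pnorm F) ((1 : F), (0 : F), (0 : F)) (affpt_proof (0, 0)).
Definition tvec (p : F * F) : F * F * F := (fr p.2, fr p.1, 1).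
Definition taff (p : F * F) : line F := mkline (tvec p).

Definition dot3 (a x : F * F * F) : F :=
  let: (a0, a1, a2) := a in let: (x0, x1, x2) := x in a0 * x0 + a1 * x1 + a2 * x2.

Lemma incidentE (P : point F) (l : line F) : incident P l = (dot3 (val l) (val P) == 0).
Proof. by case: P => [[[x0 x1] x2] hP]; case: l => [[[a0 a1] a2] hl]. Qed.

Lemma inc_taff P p : incident P (taff p) = (dot3 (tvec p) (val P) == 0).
Proof.
have [l l0 hl] := nf_scale (fr p.2) (fr p.1) (oner_neq0 F).
rewrite incidentE; change (val (taff p)) with (nf (tvec p)); rewrite /tvec hl.
case: P => [[[x0 x1] x2] hP] /=.
by rewrite -!mulrA -!mulrDr mulf_eq0 (negbTE l0).
Qed.

Lemma eq_from (x y e : F) : x - y = e -> e = 0 -> x = y.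
Proof. by move=> h1 h2; apply/eqP; rewrite -subr_eq0 h1 h2. Qed.

Lemma tangent_alg u v a b : Tr v + Nm u = 0 -> Tr b + Nm a = 0 ->
  fr v + fr u * a + b = 0 -> a = u /\ b = v.
Proof.
rewrite /Tr !NmE => h1 h2 h3.
have hb : b = - fr v - fr u * a.
  have e1 : b - (- fr v - fr u * a) = fr v + fr u * a + b by ring.
  exact: eq_from e1 h3.
have hfb : fr b = - v - u * fr a by rewrite hb frB frN frM !frK.
have hau : Nm (a - u) = 0.
  rewrite NmE frB.
  have e1 : (a - u) * (fr a - fr u) - 0 = (b + fr b + a * fr a) + (v + fr v + u * fr u).
    by rewrite hfb hb; ring.
  by apply: (eq_from e1); rewrite h2 h1 addr0.
move/eqP: hau; rewrite Nm_eq0 subr_eq0 => /eqP hau; split=> //.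
rewrite hb hau.
have e1 : (- fr v - fr u * u) - v = - (v + fr v + u * fr u) by ring.
by apply: (eq_from e1); rewrite h1 oppr0.
Qed.

Lemma circle_alg u v w al be : v = al + be * u -> Tr v + Nm u = 0 ->
  Nm (w + fr be) = Nm (u + fr be) -> Tr (al + be * w) + Nm w = 0.
Proof.
rewrite /Tr !NmE !frD !frK => hv hH hc.
have hfv : fr v = fr al + fr be * fr u by rewrite hv frD frM.
rewrite frM.
have e1 : al + be * w + (fr al + fr be * fr w) + w * fr w =
  (v + fr v + u * fr u) + ((w + fr be) * (fr w + be) - (u + fr be) * (fr u + be)).
  rewrite hfv hv; ring.
by rewrite e1 hH hc subrr addr0.
Qed.

Section Crit.
Variables (W : {set F}) (Sp : {set F * F}) (bp : bool).
Hypothesis hW : forall c r, r \in Kset -> r != 0 ->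
  (#|[set w | Nm (w - c)%R == r] :&: W| <= q.-1)%N.
Hypothesis hSp : Sp \subset AffH.
Hypothesis h1 : forall p, p \in AffH -> p.1 \notin W -> p \in Sp.
Hypothesis h3 : ~~ bp -> forall p, p \in Sp -> exists p', [/\ p' \in Sp, p' != p & p'.1 = p.1].
Hypothesis h4 : bp -> forall u, exists p, p \in Sp /\ p.1 = u.
Hypothesis h5 : bp || (Sp != set0).

Definition SS : {set point F} := (if bp then [set pinf] else set0) :|: affpt @: Sp.

Lemma inS_aff p : (affpt p \in SS) = (p \in Sp).
Proof.
rewrite /SS inE mem_imset; last exact: affpt_inj.
by case: bp; rewrite ?inE ?(negbTE (affpt_neq_pinf p)).
Qed.

Lemma inS_inf : (pinf \in SS) = bp.
Proof.
rewrite /SS inE; have -> : (pinf \in affpt @: Sp) = false.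
  apply/negbTE/imsetP => [[p _ e]]; move: (affpt_neq_pinf p); by rewrite -e eqxx.
by case: bp; rewrite ?inE ?eqxx.
Qed.

Lemma SS_H : SS \subset hermitian_curve F q.
Proof.
apply/subsetP => Q; rewrite /SS inE; case/orP.
  by case: bp; rewrite ?in_set1 ?in_set0 // => /eqP ->; exact: pinf_H.
case/imsetP => p hp ->; rewrite affpt_H; exact: (subsetP hSp).
Qed.

Lemma S_cases Q : Q \in SS -> (Q = pinf /\ bp) \/ exists2 p, p \in Sp & Q = affpt p.
Proof.
case: (point_cases Q) => [->|[[p ->]|[c hc]]].
- by rewrite inS_inf; left.
- by rewrite inS_aff; right; exists p.
- by move=> /(subsetP SS_H); rewrite (negbTE (inf_notH hc)).
Qed.

Lemma only_pt (l : line F) P : SS :&: line_pts l = [set P] ->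
  forall Q, Q \in SS -> incident Q l -> Q = P.
Proof.
move=> h Q hQ hi; apply/set1P; rewrite -h inE hQ /line_pts inE; exact: hi.
Qed.

Lemma pt_on (l : line F) P : SS :&: line_pts l = [set P] -> incident P l.
Proof. by move=> h; have := set11 P; rewrite -h !inE => /andP[]. Qed.

Lemma crit_inf : bp -> exists! l : line F, SS :&: line_pts l = [set pinf].
Proof.
move=> hb; exists tinf; split.
  apply/setP => Q; rewrite in_setI in_set1 [Q \in line_pts _]inE.
  case: (point_cases Q) => [->|[[p ->]|[c hc]]].
  - by rewrite inS_inf hb eqxx /incident /= !(mulr0, mul0r, addr0) eqxx.
  - rewrite inS_aff (negbTE (affpt_neq_pinf p)) andbC /incident /=.
    by rewrite !(mul1r, mul0r, addr0) oner_eq0.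
  - have : Q \notin SS by apply: contra (inf_notH hc); exact: (subsetP SS_H).
    move/negbTE => ->; apply/esym/negbTE/eqP => e; move: hc; rewrite e /= => [[]] /eqP.
    by rewrite eq_sym oner_eq0.
move=> l hl; have hon := pt_on hl; have honly := only_pt hl; clear hl.
case: l hon honly => [[[a0 a1] a2] hl0] hon honly.
have a20 : a2 = 0 by move: hon; rewrite /incident /= !mulr0 !add0r mulr1 => /eqP.
case: (eqVneq a1 0) => [a10|a1n].
  apply: val_inj => /=; move: (hl0); rewrite /pnorm a10 a20 eqxx /=.
  by case: (eqVneq a0 0) => [->|_ /eqP ->] //=; rewrite eq_sym oner_eq0.
have [p [hp hpu]] := h4 hb (- a0 / a1).
have := honly (affpt p); rewrite inS_aff hp => /(_ isT).
have -> : incident (affpt p) (exist (@pnorm F) (a0, a1, a2) hl0).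
  rewrite /incident /= hpu a20 mul0r addr0 mulr1; apply/eqP; field; exact: a1n.
by move=> /(_ isT) /eqP; rewrite (negbTE (affpt_neq_pinf p)).
Qed.

Definition Circ c r := [set w | Nm (w - c) == r].

Lemma card_circle c r : r \in Kset -> r != 0 -> #|[set w | Nm (w - c) == r]| = q.+1.
Proof.
move=> rK r0; rewrite -(card_Nm rK r0).
have -> : [set w | Nm (w - c) == r] = (fun x => x + c) @: [set x | Nm x == r].
  apply/setP => w; rewrite inE; apply/idP/imsetP.
    by move=> h; exists (w - c); rewrite ?inE // subrK.
  by case=> x; rewrite inE => h ->; rewrite addrK.
apply: card_imset; exact: addIr.
Qed.

Lemma crit_aff p : p \in Sp -> exists! l : line F, SS :&: line_pts l = [set affpt p].
Proof.
move=> hp.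
have hpH : Tr p.2 + Nm p.1 = 0 by move: (subsetP hSp p hp); rewrite inE => /eqP.
exists (taff p); split.
  apply/setP => Q; rewrite in_setI in_set1 [Q \in line_pts _]inE inc_taff.
  case: (point_cases Q) => [->|[[p' ->]|[c hc]]].
  - rewrite /tvec /= !mulr0 !add0r mulr1 (negbTE (oner_neq0 F)) andbF.
    by rewrite eq_sym (negbTE (affpt_neq_pinf p)).
  - rewrite inS_aff (inj_eq affpt_inj).
    case: (eqVneq p' p) => [->|ne].
      rewrite hp /=; apply/eqP.
      have e : fr p.2 * 1 + fr p.1 * p.1 + 1 * p.2 = Tr p.2 + Nm p.1 by rewrite /Tr NmE; ring.
      by rewrite e hpH.
    apply/negbTE/andP => [[hp' /eqP hd]].
    have hp'H : Tr p'.2 + Nm p'.1 = 0 by move: (subsetP hSp p' hp'); rewrite inE => /eqP.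
    rewrite /tvec /= mulr1 mul1r in hd.
    have [e1 e2] := tangent_alg hpH hp'H hd.
    by move: ne; case: p' {hp' hd hp'H} e1 e2 => a b /= -> ->; case: (p) => ? ? /=; rewrite eqxx.
  - have : Q \notin SS by apply: contra (inf_notH hc); exact: (subsetP SS_H).
    move/negbTE => ->; apply/esym/negbTE/eqP => e; move: hc; rewrite e /= => [[]] /eqP.
    by rewrite oner_eq0.
move=> l hl; have hon := pt_on hl; have honly := only_pt hl; clear hl.
case: l hon honly => [[[a0 a1] a2] hl0] hon honly.
have hPl : a0 * 1 + a1 * p.1 + a2 * p.2 = 0 by move: hon; rewrite /incident /= => /eqP.
case: (eqVneq a2 0) => [a20|a2n].
  exfalso; case: (boolP bp) => hb.
    have := honly pinf; rewrite inS_inf hb /incident /= a20 => /(_ isT).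
    rewrite !mulr0 !add0r mul0r eqxx => /(_ isT) /eqP.
    by rewrite eq_sym (negbTE (affpt_neq_pinf p)).
  have [p' [hp' ne e1]] := h3 hb hp.
  have := honly (affpt p'); rewrite inS_aff hp' /incident /= => /(_ isT).
  have hPl' : a0 * 1 + a1 * p.1 + 0 = 0 by move: hPl; rewrite a20 mul0r.
  rewrite e1 a20 mul0r hPl' eqxx => /(_ isT) /affpt_inj e.
  by move: ne; rewrite e eqxx.
pose be := - a1 / a2; pose al := - a0 / a2.
have hv : p.2 = al + be * p.1.
  apply: (mulfI a2n); rewrite /al /be.
  have e : a2 * p.2 - a2 * (- a0 / a2 + - a1 / a2 * p.1) = a0 * 1 + a1 * p.1 + a2 * p.2.
    by field; exact: a2n.
  exact: eq_from e hPl.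
case: (eqVneq (Nm (p.1 + fr be)) 0) => [r0|rn].
  move: r0; rewrite /Nm -/(Nm _) => /eqP; rewrite Nm_eq0 => /eqP hb0.
  have hfu : fr p.1 = - be.
    by have := congr1 fr hb0; rewrite frD frK fr0 => /eqP; rewrite addr_eq0 => /eqP.
  have ha1 : a1 = a2 * fr p.1.
    rewrite hfu /be; field; exact: a2n.
  have ha0 : a0 = a2 * fr p.2.
    have e : a0 = - (a1 * p.1 + a2 * p.2).
      have e' : a0 - (- (a1 * p.1 + a2 * p.2)) = a0 * 1 + a1 * p.1 + a2 * p.2 by ring.
      exact: eq_from e' hPl.
    rewrite e ha1.
    have e2 : fr p.2 = - (p.2 + p.1 * fr p.1).
      have e' : fr p.2 - (- (p.2 + p.1 * fr p.1)) = Tr p.2 + Nm p.1 by rewrite /Tr NmE; ring.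
      exact: eq_from e' hpH.
    rewrite e2; ring.
  apply: val_inj; change (nf (tvec p) = (a0, a1, a2)); symmetry.
  have [mu mu0 hmu] := nf_scale (fr p.2) (fr p.1) (oner_neq0 F).
  apply: (@norm_prop (nf (tvec p)) (a0, a1, a2) (a2 / mu)).
  - exact: nf_norm.
  - exact: hl0.
  - by rewrite mulf_neq0 // invr_eq0.
  rewrite /tvec hmu /scale3 ha0 ha1.
  congr (_, _, _); field; exact: mu0.
pose c := - fr be; pose r := Nm (p.1 + fr be).
have rK : r \in Kset by exact: NmK.
have hc := card_circle c rK rn.
have hcW := hW c rK rn.
rewrite -/(Circ c r) in hcW hc.
have h2 : (1 < #|(Circ c r) :\: W|)%N.
  have := cardsID W (Circ c r); rewrite hc; move: hcW.
  case: q hq => // n _ /=; exact: arC.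
have : (0 < #|((Circ c r) :\: W) :\ p.1|)%N.
  move: h2; rewrite (cardsD1 p.1 ((Circ c r) :\: W)).
  exact: arB.
case/card_gt0P => w; rewrite !inE => /and3P[wne wW /eqP wc].
have hw : Nm (w + fr be) = Nm (p.1 + fr be) by move: wc; rewrite /c /r opprK.
have hA : Tr (al + be * w) + Nm w = 0 by exact: circle_alg hv hpH hw.
have hp' : (w, al + be * w) \in Sp by apply: h1 => //; rewrite inE /= hA.
have := honly (affpt (w, al + be * w)); rewrite inS_aff hp' => /(_ isT).
have -> : incident (affpt (w, al + be * w)) (exist (@pnorm F) (a0, a1, a2) hl0).
  rewrite /incident /= /al /be; apply/eqP; field; exact: a2n.
by move=> /(_ isT) /affpt_inj; case: (p) wne => a b /= wne [e _]; move: wne; rewrite e eqxx.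
Qed.

Lemma crit : semioval SS /\ SS \subset hermitian_curve F q.
Proof.
split; last exact: SS_H.
split.
  case/orP: h5 => [hb|].
    by apply/set0Pn; exists pinf; rewrite inS_inf.
  case/set0Pn => p hp; apply/set0Pn; exists (affpt p); by rewrite inS_aff.
move=> P /S_cases [[-> hb]|[p hp ->]]; [exact: crit_inf | exact: crit_aff].
Qed.

End Crit.

Lemma TrB x y : Tr (x - y) = Tr x - Tr y.
Proof. rewrite /Tr frB; ring. Qed.

Lemma circ_fib_le c r l : r != 0 ->
  (#|[set w | (Nm (w - c)%R == r) && (Tr w == l)]| <= 2)%N.
Proof.
move=> r0.
pose tau := l - Tr c.
pose p : {poly F} := 'X^2 + ((- tau) *: 'X + r%:P).
have hs : size p = 3%N.
  rewrite /p size_polyDl ?size_polyXn //.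
  apply: leq_ltn_trans (size_polyD _ _) _; rewrite gtn_max.
  apply/andP; split; last by apply: leq_ltn_trans (size_polyC_leq1 _) _.
  by apply: leq_ltn_trans (size_scale_leq _ _) _; rewrite size_polyX.
have : (#|[set w | (Nm (w - c)%R == r) && (Tr w == l)]| < size p)%N.
  apply: (@roots_card _ _ (fun w => w - c)).
  - exact: addIr.
  - by rewrite -size_poly_eq0 hs.
  move=> w /andP[/eqP hN /eqP hT].
  have hT' : Tr (w - c) = tau by rewrite TrB hT.
  rewrite /root /p hornerD hornerXn hornerD hornerZ hornerX hornerC -hN -hT'; apply/eqP.
  rewrite /Tr NmE; set z := w - c; ring.
by rewrite hs.
Qed.

Lemma circW (L : {set F}) : (2 * #|L| <= q.-1)%N ->
  forall c r, r \in Kset -> r != 0 ->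
  (#|[set w | Nm (w - c)%R == r] :&: [set w | Tr w \in L]| <= q.-1)%N.
Proof.
move=> hL c r _ r0; apply: leq_trans hL.
rewrite (@card_partition_sum _ _ Tr ([set w | Nm (w - c) == r] :&: [set w | Tr w \in L]) L);
  last by move=> x; rewrite !inE => /andP[].
rewrite mulnC -sum_nat_const; apply: leq_sum => l _.
apply: leq_trans (circ_fib_le c l r0); apply: subset_leq_card.
apply/subsetP => x; rewrite !inE => /andP[/andP[-> _] ->] //.
Qed.

Definition colset w := [set p in AffH | p.1 == w].

Lemma card_col w : #|colset w| = q.
Proof.
have -> : colset w = (pair w) @: [set x | Tr x == - Nm w].
  apply/setP => [[a b]]; rewrite !inE /=; apply/andP/imsetP.
    case=> h /eqP ha; exists b; last by rewrite ha.
    by rewrite inE -ha -addr_eq0.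
  by case=> x; rewrite inE => /eqP h [-> ->]; rewrite h addNr eqxx.
rewrite card_imset; last by move=> x y [].
by apply: card_Tr; rewrite inE frN frNm.
Qed.

Lemma card_AffH_part (X : {set F}) : #|[set p in AffH | p.1 \in X]| = (q * #|X|)%N.
Proof.
rewrite (@card_partition_sum _ _ fst _ X); last by move=> x; rewrite inE => /andP[].
rewrite mulnC -sum_nat_const; apply: eq_bigr => w hw.
rewrite -(card_col w); apply: eq_card => p; rewrite !inE.
by case: (eqVneq p.1 w) => [->|]; rewrite ?hw ?andbT ?andbF.
Qed.

Lemma card_AffH : #|AffH| = (q ^ 3)%N.
Proof.
have -> : AffH = [set p in AffH | p.1 \in [set: F]] by apply/setP => p; rewrite !inE andbT.
by rewrite card_AffH_part cardsT hF expnS.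
Qed.

Lemma cardsU_disj (T : finType) (A B : {set T}) :
  (forall x, x \in A -> x \notin B) -> #|A :|: B| = (#|A| + #|B|)%N.
Proof.
move=> h; rewrite cardsU.
have -> : A :&: B = set0.
  apply/setP => x; rewrite !inE; apply/negbTE/andP => [[ha hb]]; by move: (h x ha); rewrite hb.
by rewrite cards0 subn0.
Qed.

Lemma constr_full : exists S : {set point F},
  semioval S /\ S \subset hermitian_curve F q /\ #|S| = (q ^ 3 + 1)%N.
Proof.
have hcr := @crit set0 AffH true.
case: hcr.
- by move=> c r _ _; rewrite setI0 cards0.
- exact: subxx.
- by [].
- by [].
- move=> _ u; have : (0 < #|colset u|)%N by rewrite card_col; case: q hq.
  by case/card_gt0P => p; rewrite inE => /andP[hp /eqP e]; exists p.
- by [].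
move=> hs hsub; exists (SS AffH true); split=> //; split=> //.
rewrite /SS cardsU1 card_imset; last exact: affpt_inj.
rewrite card_AffH addnC; congr (_ + _)%N.
apply/eqP; rewrite eqb1; apply/imsetP => [[p _ e]].
by move: (affpt_neq_pinf p); rewrite -e eqxx.
Qed.

Lemma card_W (L : {set F}) : L \subset Kset -> #|[set w | Tr w \in L]| = (q * #|L|)%N.
Proof.
move=> hLK.
rewrite (@card_partition_sum _ _ Tr [set w | Tr w \in L] L); last by move=> x; rewrite inE.
rewrite mulnC -sum_nat_const; apply: eq_bigr => l hl.
rewrite -(card_Tr (subsetP hLK l hl)); apply: eq_card => x; rewrite !inE.
by case: (eqVneq (Tr x) l) => [->|]; rewrite ?hl ?andbF.
Qed.

Lemma constr_e (L : {set F}) e : L \subset Kset -> (2 * #|L| <= q.-1)%N ->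
  (e %/ q + 2 <= q * #|L|)%N ->
  exists S : {set point F},
    semioval S /\ S \subset hermitian_curve F q /\ #|S| = (q ^ 3 - e)%N.
Proof.
move=> hLK hL he.
have q0 : (0 < q)%N by case: q hq.
pose W := [set w | Tr w \in L].
have hW : #|W| = (q * #|L|)%N by exact: card_W.
have hLq : (#|L| <= q)%N by rewrite -card_K; exact: subset_leq_card.
have heq : (e < q ^ 3)%N.
  have : (e %/ q < q ^ 2)%N.
    apply: (@leq_trans (q * #|L|)); first by lia.
    by rewrite expnS expn1 leq_mul2l hLq orbT.
  by rewrite ltn_divLR // -expnSr.
pose j := (e %/ q)%N; pose r := (e %% q)%N.
have [Wf [hWf cWf]] : exists Wf : {set F}, Wf \subset W /\ #|Wf| = j.
  apply: exists_subset; rewrite hW; rewrite /j; lia.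
have h2 : (1 < #|W :\: Wf|)%N.
  rewrite cardsD (setIidPr hWf) hW cWf /j; lia.
have [w1 hw1] : exists w1, w1 \in W :\: Wf.
  by apply/set0Pn; rewrite -card_gt0; lia.
have [w2 hw2] : exists w2, w2 \in (W :\: Wf) :\ w1.
  apply/set0Pn; rewrite -card_gt0.
  move: h2; rewrite (cardsD1 w1 (W :\: Wf)) hw1; move: #|_ :\ _| => a; lia.
move: hw2; rewrite !inE => /andP[w21 /andP[w2f w2W]].
move: hw1; rewrite !inE => /andP[w1f w1W].
have hr : (r < q)%N by rewrite ltn_pmod.
pose r1 := if r == q.-1 then (q - 2)%N else r.
pose r2 := if r == q.-1 then 1%N else 0%N.
have hr12 : (r1 + r2 = r)%N by exact: arD.
have hr1 : (r1 <= q - 2)%N by exact: arE.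
have hr2 : (r2 <= q - 2)%N by rewrite /r2; case: eqP => _; case: (arF hq).
have [A1 [hA1 cA1]] : exists A1 : {set F * F}, A1 \subset colset w1 /\ #|A1| = r1.
  by apply: exists_subset; rewrite card_col; apply: leq_trans hr1 (leq_subr _ _).
have [A2 [hA2 cA2]] : exists A2 : {set F * F}, A2 \subset colset w2 /\ #|A2| = r2.
  by apply: exists_subset; rewrite card_col; apply: leq_trans hr2 (leq_subr _ _).
pose X0 := [set p in AffH | p.1 \in Wf].
pose Ep := X0 :|: A1 :|: A2.
have inA1 : forall p, p \in A1 -> p \in AffH /\ p.1 = w1.
  by move=> p /(subsetP hA1); rewrite inE => /andP[? /eqP].
have inA2 : forall p, p \in A2 -> p \in AffH /\ p.1 = w2.
  by move=> p /(subsetP hA2); rewrite inE => /andP[? /eqP].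
have cEp : #|Ep| = e.
  rewrite /Ep cardsU_disj; last first.
    move=> p; rewrite inE => /orP[|/inA1[_ e1]]; last first.
      by apply/negP => /inA2[_ e2]; move: w21; rewrite -e1 -e2 eqxx.
    rewrite inE => /andP[_ hp]; apply/negP => /inA2[_ e2]; move: w2f; by rewrite -e2 hp.
  rewrite cardsU_disj; last first.
    move=> p; rewrite inE => /andP[_ hp]; apply/negP => /inA1[_ e1]; move: w1f; by rewrite -e1 hp.
  rewrite card_AffH_part cWf cA1 cA2 -addnA hr12 /j /r mulnC -divn_eq //.
have EpW : forall p, p \in Ep -> p \in AffH /\ p.1 \in W.
  move=> p; rewrite /Ep !in_setU => /orP[/orP[|/inA1[hp ->]]|/inA2[hp ->]];
    try by split; rewrite // inE.
  rewrite /X0 inE => /andP[hp hf]; split=> //; exact: (subsetP hWf).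
pose Sp := AffH :\: Ep.
have cSp : #|Sp| = (q ^ 3 - e)%N.
  have EpA : Ep \subset AffH by apply/subsetP => x /EpW[].
  by rewrite /Sp cardsD card_AffH (setIidPr EpA) cEp.
have hcr := @crit W Sp false.
case: hcr.
- exact: circW.
- exact: subsetDl.
- move=> p hp hpW; rewrite inE hp andbT; apply/negP => /EpW[_]; exact/negP.
- move=> _ p; rewrite inE => /andP[hpE hp].
  pose u := p.1.
  have hcol : (#|colset u :&: Ep| <= q - 2)%N.
    have huf : u \notin Wf.
      apply/negP => hu; move/negP: hpE; apply; by rewrite /Ep !in_setU /X0 inE hp hu.
    have sub : colset u :&: Ep \subset (if u == w1 then A1 else if u == w2 then A2 else set0).
      apply/subsetP => x; rewrite !inE => /andP[/andP[_ /eqP ex]] /orP[/orP[|]|].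
      + by rewrite ex (negbTE huf) andbF.
      + by move=> hx; have [_ e1] := inA1 x hx; rewrite -ex e1 eqxx.
      move=> hx; have [_ e2] := inA2 x hx; rewrite -ex e2 (negbTE w21) eqxx //.
    apply: leq_trans (subset_leq_card sub) _.
    by case: (u == w1); [rewrite cA1 | case: (u == w2); rewrite ?cA2 ?cards0].
  have hgt : (1 < #|colset u :\: Ep|)%N.
    by rewrite cardsD card_col; apply: arA.
  have hpc : p \in colset u :\: Ep by rewrite in_setD hpE /colset inE hp eqxx.
  have : (0 < #|(colset u :\: Ep) :\ p|)%N.
    move: hgt; rewrite (cardsD1 p (colset u :\: Ep)) hpc; exact: arB.
  case/card_gt0P => p'; rewrite in_setD1 in_setD => /and3P[ne hp'E hp'c].
  move: hp'c; rewrite /colset inE => /andP[hp'A /eqP e1].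
  by exists p'; split=> //; rewrite /Sp in_setD hp'E hp'A.
- by [].
- by rewrite /= -card_gt0 cSp subn_gt0.
move=> hs hsub; exists (SS Sp false); split=> //; split=> //.
by rewrite /SS set0U card_imset ?cSp //; exact: affpt_inj.
Qed.

End Field.

Local Close Scope ring_scope.

Theorem mainTheorem5 (q : nat) (F : finFieldType) :
  prime_power q -> (2 < q)%N -> #|F| = (q ^ 2)%N ->
  forall k : nat,
    (k <= q ^ 3 + 1)%N ->
    (if odd q then ((q ^ 3 + 2 * q ^ 2 - q + 2) %/ 2 <= k)%N
     else ((q ^ 3 + 3 * q ^ 2 - 2 * q + 2) %/ 2 <= k)%N) ->
    exists S : {set point F},
      semioval S /\ S \subset hermitian_curve F q /\ #|S| = k.
Proof.
move=> [p [n [pp [n0 eqq]]]] hq hF k hk hkmin.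
have hch : p \in [pchar F]%R.
  apply: (@card_finPcharP F p (n * 2)) => //; by rewrite hF eqq -expnM.
have frD_ : forall x y : F, ((x + y) ^+ q = x ^+ q + y ^+ q)%R.
  move=> x y; apply: exprDn_pchar; by rewrite eqq pnatX pnatE // hch.
case: (eqVneq k (q ^ 3 + 1)) => [->|hk1]; first exact: constr_full.
have hk3 : k <= q ^ 3.
  by move: hk hk1; rewrite leq_eqVlt addn1 ltnS => /orP[/eqP->|]; rewrite ?eqxx.
have [t [t0 hmt hqt]] := q_param hq.
have htq : t <= #|Kset F q|.
  rewrite card_K //; case: (odd q) hqt => e; rewrite e; lia.
have [L [hLK cL]] := exists_subset htq.
have hlt : q ^ 3 - k < q * (q * t - 1).
  move: hkmin hk3; case: (odd q) hqt => e; rewrite e.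
    move=> h1 h2; exact: odd_case.
  move=> h1 h2; exact: even_case.
have hL2 : 2 * #|L| <= q.-1 by rewrite cL -hmt; rewrite -[X in _ <= X](odd_double_half q.-1) mul2n leq_addl.
have he : (q ^ 3 - k) %/ q + 2 <= q * #|L|.
  have q0 : 0 < q by apply: leq_trans hq.
  have : (q ^ 3 - k) %/ q < q * t - 1 by rewrite ltn_divLR // mulnC.
  rewrite cL; lia.
have [S [hS1 [hS2 hS3]]] := constr_e hq hF frD_ hLK hL2 he.
by exists S; split => //; split => //; rewrite hS3 subKn.
Qed.
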